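(* In the model described in the context, suppose $\triangle C=0$. Let $\underline\alpha_x=(M+N+1)k$ and $\bar\alpha_x=\frac{(M+1)\sqrt{N+1}}{2(\sqrt{N+1}-1)}Nk$. Then for all $\alpha_x\in[\underline\alpha_x,\bar\alpha_x]$ there exist $(f,x)\in Q$ and $x_S\in X(0)$ such that \[Mx+Ny_j(f\mathbf1,x\mathbf1)<Mx_S+Ny_j(\mathbf0,x_S\mathbf1),\qquad \mathsf{SW}(y_j(f\mathbf1,x\mathbf1),x)<\mathsf{SW}(y_j(\mathbf0,x_S\mathbf1),x_S).\] Moreover, \[\frac{Mx_S+Ny_j(\mathbf0,x_S\mathbf1)}{Mx+Ny_j(f\mathbf1,x\mathbf1)}\le\frac{(MN+M+N)(M+1)}{M(M+1)(N+1)+2(N+1-\sqrt{N+1})},\] \[\frac{\mathsf{SW}(y_j(\mathbf0,x_S\mathbf1),x_S)}{\mathsf{SW}(y_j(f\mathbf1,x\mathbf1),x)}\le\frac{(M+1)^2(MN+M+N)(MN+M+N+2)}{(N+1)\big((M^2+M+2)\sqrt{N+1}-2\big)\big((M^2+3M)\sqrt{N+1}+2\big)},\] where the inequalities are tight.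
   Context: Model: $M\ge1$ leaders and $N\ge2$ followers; inverse demand $P(q)=\alpha-\beta q$, $\alpha,\beta>0$; leader marginal cost $C$, follower marginal cost $c$, $c\ge C>0$; follower capacity $k>0$. Leader $i$ produces $x_i\ge0$; follower $j$ takes forward position $f_j\in\mathbb{R}$ and spot production $y_j\in[0,k]$. Given $\mathbf f,\mathbf x$, the spot market is the game among followers where follower $j$ chooses $y_j\in[0,k]$ to maximize $P(\sum_ix_i+\sum_{j'}y_{j'})(y_j-f_j)-cy_j$; its unique Nash equilibrium is $\mathbf y(\mathbf f,\mathbf x)=(y_1(\mathbf f,\mathbf x),\dots,y_N(\mathbf f,\mathbf x))$. Follower $j$'s forward payoff is $(P(\sum_ix_i+\sum_{j'}y_{j'}(\mathbf f,\mathbf x))-c)y_j(\mathbf f,\mathbf x)$, maximized over $f_j\in\mathbb{R}$; leader $i$'s payoff is $\psi_i=(P(\sum_ix_i+\sum_{j'}y_{j'}(\mathbf f,\mathbf x))-C)x_i$, maximized over $x_i\in\mathbb{R}_+$. A Nash equilibrium of the forward market is $(\mathbf f,\mathbf x)$ where no leader or follower can strictly gain by a unilateral deviation; $Q=\{(f,x)\in\mathbb{R}\times\mathbb{R}_+:(f\mathbf1,x\mathbf1)\text{ is a Nash equilibrium}\}$. The symmetric Stackelberg equilibria are $X(0)=\{x\in\mathbb{R}_+:\psi_i(x;x\mathbf1,\mathbf0)\ge\psi_i(\bar x;x\mathbf1,\mathbf0)\ \forall\bar x\in\mathbb{R}_+,\ \forall i\}$, where $\psi_i(\bar x;x\mathbf1,\mathbf0)$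 is leader $i$'s payoff when it produces $\bar x$, the other leaders produce $x$, and all followers' forward positions are $0$. Social welfare of symmetric productions (followers $y$, leaders $x$): $\mathsf{SW}(y,x)=\int_0^{Mx+Ny}P(w)\,dw-(MCx+Ncy)$. $\alpha_x=(\alpha-C)/\beta$, $\triangle C=(c-C)/\beta$. *)

(* Defs.v *)
From Stdlib Require Import Reals Lra ClassicalEpsilon.
Open Scope R_scope.

Fixpoint sumR (n : nat) (g : nat -> R) : R :=
  match n with
  | O => 0
  | S n' => sumR n' g + g n'
  end.

Definition upd (g : nat -> R) (j : nat) (v : R) : nat -> R :=
  fun i => if Nat.eqb i j then v else g i.

Definition cst (a : R) : nat -> R := fun _ => a.

Section Model.
(* M leaders (indices 0..M-1), N followers (indices 0..N-1),
   P(q) = alpha - beta q, leader cost C, follower cost c, capacity k. *)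
Variables (M N : nat) (alpha beta C c k : R).

Definition P (q : R) : R := alpha - beta * q.

(* follower j's spot-market payoff, given forward positions f, leaders' x,
   followers' productions y *)
Definition spot_payoff (f x y : nat -> R) (j : nat) : R :=
  P (sumR M x + sumR N y) * (y j - f j) - c * y j.

Definition spot_NE (f x : nat -> R) (y : nat -> R) : Prop :=
  (forall j, (j < N)%nat -> 0 <= y j <= k) /\
  (forall j, (j < N)%nat -> forall v, 0 <= v <= k ->
      spot_payoff f x (upd y j v) j <= spot_payoff f x y j).

(* y(f,x): the (unique) spot-market Nash equilibrium *)
Definition yspot (f x : nat -> R) : nat -> R :=
  epsilon (inhabits (cst 0)) (spot_NE f x).

Definition total (f x : nat -> R) : R := sumR M x + sumR N (yspot f x).

Definition follower_payoff (f x : nat -> R) (j : nat) : R :=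
  (P (total f x) - c) * yspot f x j.

Definition leader_payoff (f x : nat -> R) (i : nat) : R :=
  (P (total f x) - C) * x i.

Definition forward_NE (f x : nat -> R) : Prop :=
  (forall i, (i < M)%nat -> 0 <= x i) /\
  (forall j, (j < N)%nat -> forall v : R,
      follower_payoff (upd f j v) x j <= follower_payoff f x j) /\
  (forall i, (i < M)%nat -> forall v : R, 0 <= v ->
      leader_payoff f (upd x i v) i <= leader_payoff f x i).

Definition inQ (f x : R) : Prop := 0 <= x /\ forward_NE (cst f) (cst x).

(* x in X(0): symmetric Stackelberg equilibria *)
Definition inX0 (x : R) : Prop :=
  0 <= x /\
  forall xb : R, 0 <= xb -> forall i, (i < M)%nat ->
    leader_payoff (cst 0) (upd (cst x) i xb) i <= leader_payoff (cst 0) (cst x) i.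

(* social welfare; int_0^Q P(w) dw = alpha Q - beta Q^2 / 2 *)
Definition SW (y x : R) : R :=
  let Qt := INR M * x + INR N * y in
  alpha * Qt - beta * Qt ^ 2 / 2 - (INR M * C * x + INR N * c * y).

End Model.

(* Main.v *)
Require Import Defs.
From Stdlib Require Import Reals Lra Lia Psatz ClassicalEpsilon.
Open Scope R_scope.

Lemma sumR_ext n g h : (forall i, (i < n)%nat -> g i = h i) -> sumR n g = sumR n h.
Proof.
  induction n; intros H; simpl; auto.
  rewrite IHn by (intros; apply H; lia). rewrite H by lia. reflexivity.
Qed.

Lemma sumR_cst n a : sumR n (cst a) = INR n * a.
Proof.
  induction n; [simpl; ring|]. rewrite S_INR. simpl sumR. rewrite IHn. unfold cst. ring.
Qed.

Lemma sumR_upd n g j v : (j < n)%nat -> sumR n (upd g j v) = sumR n g - g j + v.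
Proof.
  induction n; intros H; [lia|]. simpl.
  destruct (Nat.eq_dec j n) as [->|Hne].
  - rewrite (sumR_ext n (upd g n v) g).
    + unfold upd. rewrite Nat.eqb_refl. ring.
    + intros i Hi. unfold upd. destruct (Nat.eqb_spec i n); [lia|auto].
  - rewrite IHn by lia. unfold upd. destruct (Nat.eqb_spec n j); [lia|]. ring.
Qed.

Lemma upd_same g j v : upd g j v j = v.
Proof. unfold upd. rewrite Nat.eqb_refl. reflexivity. Qed.

Lemma upd_other g j v i : i <> j -> upd g j v i = g i.
Proof. intros H. unfold upd. destruct (Nat.eqb_spec i j); [lia|auto]. Qed.

Lemma sumR_nonneg n g : (forall i, (i < n)%nat -> 0 <= g i) -> 0 <= sumR n g.
Proof.
  induction n; intros H; simpl; [lra|].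
  assert (0 <= sumR n g) by (apply IHn; intros; apply H; lia).
  assert (0 <= g n) by (apply H; lia). lra.
Qed.

Lemma sumR_le0 n g : (forall i, (i < n)%nat -> g i <= 0) -> sumR n g <= 0.
Proof.
  induction n; intros H; simpl; [lra|].
  assert (sumR n g <= 0) by (apply IHn; intros; apply H; lia).
  assert (g n <= 0) by (apply H; lia). lra.
Qed.

Lemma sumR_zero n g : (forall i, (i < n)%nat -> 0 <= g i) -> sumR n g <= 0 ->
  forall i, (i < n)%nat -> g i = 0.
Proof.
  induction n; intros H Hs i Hi; [lia|]. simpl in Hs.
  assert (0 <= sumR n g) by (apply sumR_nonneg; intros; apply H; lia).
  assert (0 <= g n) by (apply H; lia).
  destruct (Nat.eq_dec i n) as [->|Hne]; [lra|].
  apply IHn; [intros; apply H; lia|lra|lia].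
Qed.

Lemma sumR_uniq_aux n g h D :
  sumR n (fun j => (g j - h j) * D + (g j - h j)^2/2)
  = D * (sumR n g - sumR n h) + sumR n (fun j => (g j - h j)^2)/2.
Proof. induction n; [simpl; field|]. change (sumR (S n) ?F) with (sumR n F + F n). rewrite IHn. field. Qed.

Section S.
Variables (M N : nat) (alpha beta c k : R).

Lemma spot_diff f x y j v : (j < N)%nat ->
  spot_payoff M N alpha beta c f x (upd y j v) j - spot_payoff M N alpha beta c f x y j
  = (v - y j) * ((alpha - beta * (sumR M x + sumR N y - y j) + beta * f j - c) - beta * (v + y j)).
Proof.
  intros Hj. unfold spot_payoff, P. rewrite sumR_upd by auto. rewrite upd_same. ring.
Qed.

Lemma NE_of_cases f x y : 0 < beta ->
  (forall j, (j < N)%nat -> 0 <= y j <= k /\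
    let G := alpha - beta*(sumR M x + sumR N y - y j) + beta * f j - c in
    (y j = k /\ 2*beta*k <= G) \/ 2*beta*y j = G \/ (y j = 0 /\ G <= 0)) ->
  spot_NE M N alpha beta c k f x y.
Proof.
  intros Hb H. split; [intros j Hj; apply H; auto|].
  intros j Hj v Hv. pose proof (spot_diff f x y j v Hj) as E.
  destruct (H j Hj) as [Hy HG]. simpl in HG.
  set (G := alpha - beta * (sumR M x + sumR N y - y j) + beta * f j - c) in *.
  assert ((v - y j) * (G - beta * (v + y j)) <= 0).
  { destruct HG as [[E1 E2]|[E1|[E1 E2]]].
    - rewrite E1. assert (v - k <= 0) by lra. assert (0 <= G - beta*(v+k)) by nra. nra.
    - replace (G - beta*(v + y j)) with (- beta * (v - y j)) by lra. assert (0 <= beta * ((v - y j)*(v - y j))) by (apply Rmult_le_pos; [lra| apply Rle_0_sqr]). lra.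
    - rewrite E1. nra. }
  lra.
Qed.

Lemma NE_unique f x y y' : 0 < beta ->
  spot_NE M N alpha beta c k f x y -> spot_NE M N alpha beta c k f x y' ->
  forall j, (j < N)%nat -> y j = y' j.
Proof.
  intros Hb [B1 N1] [B2 N2].
  set (D := sumR N y - sumR N y').
  assert (Hjj : forall j, (j < N)%nat -> (y j - y' j) * D + (y j - y' j)^2/2 <= 0).
  { intros j Hj. destruct (B1 j Hj). destruct (B2 j Hj).
    pose proof (N1 j Hj ((3 * y j + y' j)/4) ltac:(lra)) as I1.
    pose proof (N2 j Hj ((3 * y' j + y j)/4) ltac:(lra)) as I2.
    pose proof (spot_diff f x y j ((3 * y j + y' j)/4) Hj) as E1.
    pose proof (spot_diff f x y' j ((3 * y' j + y j)/4) Hj) as E2.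
    assert (E : ((3 * y j + y' j) / 4 - y j) *
       (alpha - beta * (sumR M x + sumR N y - y j) + beta * f j - c -
        beta * ((3 * y j + y' j) / 4 + y j)) +
       ((3 * y' j + y j) / 4 - y' j) *
       (alpha - beta * (sumR M x + sumR N y' - y' j) + beta * f j - c -
        beta * ((3 * y' j + y j) / 4 + y' j)) =
       beta / 4 * ((y j - y' j) * D + (y j - y' j)^2/2)) by (unfold D; simpl; field).
    assert (beta / 4 * ((y j - y' j) * D + (y j - y' j)^2/2) <= 0) by lra.
    destruct (Rle_dec ((y j - y' j) * D + (y j - y' j)^2/2) 0); auto.
    assert (0 < beta/4) by lra. nra. }
  assert (S : sumR N (fun j => (y j - y' j) * D + (y j - y' j)^2/2) <= 0)
    by (apply sumR_le0; intros; apply Hjj; auto).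
  rewrite sumR_uniq_aux in S. fold D in S.
  assert (0 <= sumR N (fun j => (y j - y' j)^2))
    by (apply sumR_nonneg; intros; apply pow2_ge_0).
  assert (Z : sumR N (fun j => (y j - y' j)^2) <= 0) by nra.
  intros j Hj. pose proof (sumR_zero N _ (fun i _ => pow2_ge_0 (y i - y' i)) Z j Hj).
  nra.
Qed.

Lemma yspot_eq f x y : 0 < beta -> spot_NE M N alpha beta c k f x y ->
  forall j, (j < N)%nat -> yspot M N alpha beta c k f x j = y j.
Proof.
  intros Hb H j Hj. unfold yspot.
  pose proof (epsilon_spec (inhabits (cst 0)) (spot_NE M N alpha beta c k f x)
     (ex_intro _ y H)) as He.
  apply (NE_unique f x); auto.
Qed.

End S.

Lemma sym_spot M N alpha beta c k F x t : 0 < beta -> 0 <= t <= k ->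
  (t = k /\ beta * (INR N + 1) * k <= alpha - c - beta * sumR M x + beta * F) \/
  beta * (INR N + 1) * t = alpha - c - beta * sumR M x + beta * F \/
  (t = 0 /\ alpha - c - beta * sumR M x + beta * F <= 0) ->
  forall j, (j < N)%nat -> yspot M N alpha beta c k (cst F) x j = t.
Proof.
  intros Hb Ht H j Hj.
  apply (yspot_eq M N alpha beta c k (cst F) x (cst t)); auto.
  apply NE_of_cases; auto. intros i Hi. unfold cst at 1 2 4. split; auto.
  rewrite sumR_cst. unfold cst.
  destruct H as [[E1 E2]|[E1|[E1 E2]]].
  - left. split; auto. subst t. nra.
  - right; left. nra.
  - right; right. split; auto. subst t. nra.
Qed.

Lemma dev_spot M N alpha beta c k F x0 j0 v w : 0 < beta -> 0 < k -> (j0 < N)%nat -> 0 <= w <= k ->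
  (let G0 := alpha - beta * (INR M * x0 + (INR N - 1) * k) + beta * v - c in
   (w = k /\ 2 * beta * k <= G0) \/ 2 * beta * w = G0 \/ (w = 0 /\ G0 <= 0)) ->
  2 * beta * k <= alpha - beta * (INR M * x0 + (INR N - 2) * k + w) + beta * F - c ->
  forall i, (i < N)%nat ->
    yspot M N alpha beta c k (upd (cst F) j0 v) (cst x0) i = upd (cst k) j0 w i.
Proof.
  intros Hb Hk Hj0 Hw HG Hoth i Hi.
  apply yspot_eq; auto.
  apply NE_of_cases; auto. intros j Hj.
  rewrite sumR_cst, sumR_upd by auto. rewrite sumR_cst.
  destruct (Nat.eq_dec j j0) as [->|Hne].
  - rewrite (upd_same (cst k) j0 w), (upd_same (cst F) j0 v). split; auto. simpl in HG.
    unfold cst.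
    destruct HG as [[E1 E2]|[E1|[E1 E2]]].
    + left. split; auto. subst w. nra.
    + right; left. rewrite E1. ring.
    + right; right. split; auto. subst w. nra.
  - rewrite !upd_other by auto. unfold cst. split; [lra|].
    left. split; auto. nra.
Qed.

Lemma clip3 (E L : R) : 0 < L -> exists t, 0 <= t <= 1 /\
   ((t = 1 /\ L <= E) \/ L * t = E \/ (t = 0 /\ E <= 0)).
Proof.
  intros HL. destruct (Rle_lt_dec L E) as [h|h].
  - exists 1. split; [lra|]. left; split; auto.
  - destruct (Rle_lt_dec E 0) as [h'|h'].
    + exists 0. split; [lra|]. right; right; split; auto.
    + exists (E / L). split.
      * split; [apply Rlt_le; apply Rdiv_lt_0_compat; lra|].
        apply Rlt_le. apply (Rmult_lt_reg_r L); auto. unfold Rdiv. rewrite Rmult_assoc, Rinv_l by lra. lra.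
      * right; left. field. lra.
Qed.

Lemma clipk (E L k : R) : 0 < L -> 0 < k -> exists t, 0 <= t <= k /\
   ((t = k /\ L * k <= E) \/ L * t = E \/ (t = 0 /\ E <= 0)).
Proof.
  intros HL Hk. destruct (clip3 E (L*k)) as [u [Hu H]]; [nra|].
  exists (u * k). split; [nra|].
  destruct H as [[E1 E2]|[E1|[E1 E2]]].
  - left. subst u. split; [ring| lra].
  - right; left. rewrite <- E1. ring.
  - right; right. subst u. split; [ring|lra].
Qed.

Lemma core M N alpha beta C k a s :
  0 < beta -> 0 < k -> 1 <= INR M -> 2 <= INR N -> s * s = INR N + 1 -> 1 < s ->
  alpha = C + beta * a ->
  (INR M + INR N + 1) * k <= a -> 2 * a * (s - 1) <= (INR M + 1) * s * INR N * k ->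
  inQ M N alpha beta C C k ((INR N + 2) * k + INR M * ((a - INR N * k) / (INR M + 1)))
      ((a - INR N * k) / (INR M + 1)) /\
  inX0 M N alpha beta C C k (a / (INR M + 1)) /\
  (forall j, (j < N)%nat -> yspot M N alpha beta C k
       (cst ((INR N + 2) * k + INR M * ((a - INR N * k) / (INR M + 1))))
       (cst ((a - INR N * k) / (INR M + 1))) j = k) /\
  (forall j, (j < N)%nat -> yspot M N alpha beta C k (cst 0) (cst (a / (INR M + 1))) j
       = a / ((INR M + 1) * (INR N + 1))).
Proof.
  intros Hb Hk Hm Hn Hs Hs1 Ha Hlo Hhi.
  set (m := INR M) in *. set (n := INR N) in *.
  set (x0 := (a - n * k) / (m + 1)).
  set (F := (n + 2) * k + m * x0).
  set (xS := a / (m + 1)).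
  set (tS := a / ((m + 1) * (n + 1))).
  assert (Hx0 : (m + 1) * x0 = a - n * k) by (unfold x0; field; lra).
  assert (HxS : (m + 1) * xS = a) by (unfold xS; field; lra).
  assert (HtS : (n + 1) * tS = xS) by (unfold tS, xS; field; lra).
  assert (Hx0p : 0 <= x0) by nra.
  assert (HD : (m + 1) * (a - m * x0 - (n + 1) * k) = a - (m + n + 1) * k) by (unfold x0; field; lra).
  assert (HD' : 0 <= a - m * x0 - (n + 1) * k).
  { destruct (Rle_lt_dec 0 (a - m * x0 - (n + 1) * k)); auto. nra. }
  assert (Hap : 0 < a) by nra.
  assert (HxSp : 0 < xS) by nra.
  assert (Hn' : n = s * s - 1) by lra.
  assert (H2 : 2 * xS * (s - 1) <= s * n * k).
  { assert (E : 2 * a * (s - 1) = (m + 1) * (2 * xS * (s - 1))) by (rewrite <- HxS; ring).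
    destruct (Rle_lt_dec (2 * xS * (s - 1)) (s * n * k)); auto. nra. }
  assert (H3 : 2 * xS <= s * (s + 1) * k).
  { destruct (Rle_lt_dec (2 * xS) (s * (s + 1) * k)); auto.
    assert (s * n * k = s * (s + 1) * k * (s - 1)) by (rewrite Hn'; ring). nra. }
  assert (HtSk : 0 <= tS <= k).
  { assert (s * (s + 1) * k <= 2 * (n + 1) * k).
    { rewrite <- Hs. assert (0 <= (s - 1) * s * k) by (apply Rmult_le_pos; [nra|lra]). nra. }
    assert (xS <= (n + 1) * k) by lra.
    split; [nra|]. nra. }
  assert (Y1 : forall j, (j < N)%nat -> yspot M N alpha beta C k (cst F) (cst x0) j = k).
  { apply sym_spot; [auto|lra|]. left. split; auto. rewrite sumR_cst. fold m n.
    unfold F. subst alpha. fold m n. nra. }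
  assert (Y2 : forall j, (j < N)%nat -> yspot M N alpha beta C k (cst 0) (cst xS) j = tS).
  { apply sym_spot; [auto|lra|]. right; left. rewrite sumR_cst. fold m n. subst alpha.
    assert (beta * ((n + 1) * tS) = beta * xS) by (rewrite HtS; ring).
    assert (beta * ((m + 1) * xS) = beta * a) by (rewrite HxS; ring). lra. }
  split; [|split; [|split; auto]].
  -
    split; [lra|]. split; [intros; unfold cst; lra|]. split.
    + intros j Hj v.
      set (G0 := alpha - beta * (m * x0 + (n - 1) * k) + beta * v - C).
      destruct (clipk G0 (2 * beta) k) as [w [Hw HG]]; [lra|auto|].
      assert (Yd : forall i, (i < N)%nat ->
        yspot M N alpha beta C k (upd (cst F) j v) (cst x0) i = upd (cst k) j w i).
      { apply dev_spot; auto.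
        unfold F. subst alpha. fold m n. nra. }
      unfold follower_payoff, total, P.
      rewrite (sumR_ext N _ _ Yd), Yd, upd_same, sumR_upd, !sumR_cst by auto.
      rewrite (sumR_ext N _ (cst k) Y1), Y1, !sumR_cst by auto. fold m n. unfold cst.
      subst alpha.
      assert (0 <= beta * ((k - w) * (a - m * x0 - n * k - w))).
      { apply Rmult_le_pos; [lra|]. apply Rmult_le_pos; lra. }
      nra.
    + intros i Hi v Hv.
      set (E := alpha - C - beta * (m * x0 - x0 + v) + beta * F).
      destruct (clipk E (beta * (n + 1)) k) as [t [Ht HE]]; [nra|auto|].
      assert (Yt : forall j, (j < N)%nat ->
        yspot M N alpha beta C k (cst F) (upd (cst x0) i v) j = t).
      { apply sym_spot; auto. rewrite sumR_upd, sumR_cst by auto. fold m n. unfold cst.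
        fold E. destruct HE as [[E1 E2]|[E1|[E1 E2]]]; [left|right;left|right;right];
          try split; auto; lra. }
      unfold leader_payoff, total, P.
      rewrite (sumR_ext N _ (cst t) Yt), (sumR_ext N _ (cst k) Y1), upd_same, sumR_upd, !sumR_cst by auto.
      fold m n. unfold cst.
      assert (HR : alpha - beta * (m * x0 + n * k) - C = beta * x0) by (subst alpha; fold m n; nra).
      rewrite HR.
      destruct HE as [[E1 E2]|[E1|[E1 E2]]].
      * subst t. subst alpha.
        assert (0 <= beta * ((x0 - v) * (x0 - v))) by (apply Rmult_le_pos; [lra|apply Rle_0_sqr]).
        nra.
      *
        assert (Hmg : (alpha - beta * (m * x0 - x0 + v + n * t) - C) * (n + 1)
                      = E - beta * (n + 1) * F).
        { unfold E. unfold E in E1. nra. }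
        assert (E <= beta * (n + 1) * k) by (rewrite <- E1; apply Rmult_le_compat_l; [nra|lra]).
        assert (F >= k) by (unfold F; nra).
        assert (Hb2 : beta * (n + 1) * F >= beta * (n + 1) * k) by (apply Rmult_ge_compat_l; [nra|lra]).
        assert ((alpha - beta * (m * x0 - x0 + v + n * t) - C) * (n + 1) <= 0) by lra.
        assert (alpha - beta * (m * x0 - x0 + v + n * t) - C <= 0) by nra.
        assert (0 <= beta * (x0 * x0)) by (apply Rmult_le_pos; [lra|apply Rle_0_sqr]).
        nra.
      * subst t. unfold E in E2.
        assert (F >= k) by (unfold F; nra).
        assert (alpha - beta * (m * x0 - x0 + v + n * 0) - C <= 0) by nra.
        assert (0 <= beta * (x0 * x0)) by (apply Rmult_le_pos; [lra|apply Rle_0_sqr]).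
        nra.
  -
    split; [lra|]. intros xb Hxb i Hi.
    set (E := alpha - C - beta * (m * xS - xS + xb) + beta * 0).
    destruct (clipk E (beta * (n + 1)) k) as [t [Ht HE]]; [nra|auto|].
    assert (Yt : forall j, (j < N)%nat ->
      yspot M N alpha beta C k (cst 0) (upd (cst xS) i xb) j = t).
    { apply sym_spot; auto. rewrite sumR_upd, sumR_cst by auto. fold m n. unfold cst.
      fold E. destruct HE as [[E1 E2]|[E1|[E1 E2]]]; [left|right;left|right;right];
        try split; auto; lra. }
    unfold leader_payoff, total, P.
    rewrite (sumR_ext N _ (cst t) Yt), (sumR_ext N _ (cst tS) Y2), upd_same, sumR_upd, !sumR_cst by auto.
    fold m n. unfold cst.
    assert (HR : alpha - beta * (m * xS + n * tS) - C = beta * tS) by (subst alpha; fold m n; nra).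
    rewrite HR.
    assert (HEv : E = beta * (2 * xS - xb)) by (unfold E; subst alpha; fold m n; nra).
    assert (HtSxS : (n + 1) * (tS * xS) = xS * xS) by (rewrite <- Rmult_assoc, HtS; ring).
    assert (0 <= beta * (tS * xS)) by (apply Rmult_le_pos; [lra|nra]).
    destruct HE as [[E1 E2]|[E1|[E1 E2]]].
    + subst t. rewrite HEv in E2.
      assert (HB : xb + k <= 2 * xS - n * k) by nra.
      set (B := 2 * xS - n * k) in *.
      assert (HsB : s * B <= 2 * xS) by (unfold B; nra).
      assert (H4 : 4 * ((B - xb) * xb) <= B * B).
      { pose proof (Rle_0_sqr (B - 2 * xb)). unfold Rsqr in *. nra. }
      assert (H5 : (s * B) * (s * B) <= (2 * xS) * (2 * xS)).
      { apply Rmult_le_compat; nra. }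
      assert (H5' : s * s * (4 * ((B - xb) * xb)) <= s * s * (B * B)).
      { apply Rmult_le_compat_l; nra. }
      assert (H6 : (n + 1) * ((B - xb) * xb) <= (n + 1) * (tS * xS)).
      { rewrite HtSxS, <- Hs. nra. }
      assert (H7 : (B - xb) * xb <= tS * xS) by nra.
      assert (alpha - beta * (m * xS - xS + xb + n * k) - C = beta * (B - xb))
        by (unfold B; subst alpha; fold m n; nra).
      nra.
    + assert (Hmg : (alpha - beta * (m * xS - xS + xb + n * t) - C) * (n + 1) = E).
      { unfold E. unfold E in E1. nra. }
      rewrite HEv in Hmg.
      assert (H4 : (2 * xS - xb) * xb <= xS * xS).
      { pose proof (Rle_0_sqr (xS - xb)). unfold Rsqr in *. nra. }
      assert (Hq : (alpha - beta * (m * xS - xS + xb + n * t) - C) * xb * (n + 1)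
                   = beta * ((2 * xS - xb) * xb)).
      { transitivity ((alpha - beta * (m * xS - xS + xb + n * t) - C) * (n + 1) * xb); [ring|].
        rewrite Hmg; ring. }
      assert (Hr : beta * tS * xS * (n + 1) = beta * (xS * xS)) by (rewrite <- HtSxS; ring).
      apply (Rmult_le_reg_r (n + 1)); [lra|]. rewrite Hq, Hr.
      apply Rmult_le_compat_l; lra.
    + subst t. rewrite HEv in E2.
      assert (alpha - beta * (m * xS - xS + xb + n * 0) - C <= 0) by (subst alpha; fold m n; nra).
      nra.
Qed.

Lemma frac_le A B A' B' : 0 < B -> 0 < B' -> A * B' <= A' * B -> A / B <= A' / B'.
Proof.
  intros HB HB' H.
  assert (E : A / B - A' / B' = (A * B' - A' * B) * / (B * B')) by (field; lra).
  assert (0 < / (B * B')) by (apply Rinv_0_lt_compat; nra).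
  assert ((A * B' - A' * B) * / (B * B') <= 0) by nra. lra.
Qed.

Lemma frac_eq A B A' B' : 0 < B -> 0 < B' -> A * B' = A' * B -> A / B = A' / B'.
Proof.
  intros HB HB' H.
  assert (E : A / B - A' / B' = (A * B' - A' * B) * / (B * B')) by (field; lra).
  rewrite H in E. lra.
Qed.

Lemma num_main m n s k a alpha beta C :
  1 <= m -> n = s * s - 1 -> 2 <= n -> 1 < s -> 0 < k -> 0 < beta -> alpha = C + beta * a ->
  (m + n + 1) * k <= a -> 2 * a * (s - 1) <= (m + 1) * s * n * k ->
  let x0 := (a - n * k) / (m + 1) in let xS := a / (m + 1) in
  let tS := a / ((m + 1) * (n + 1)) in
  let SWf := fun y x => alpha * (m * x + n * y) - beta * (m * x + n * y) ^ 2 / 2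
                        - (m * C * x + n * C * y) in
  let b1 := (m * n + m + n) * (m + 1)
              / (m * (m + 1) * (n + 1) + 2 * (n + 1 - s)) in
  let b2 := (m + 1) ^ 2 * (m * n + m + n) * (m * n + m + n + 2)
              / ((n + 1) * ((m ^ 2 + m + 2) * s - 2)
                 * ((m ^ 2 + 3 * m) * s + 2)) in
  m * x0 + n * k < m * xS + n * tS /\ SWf k x0 < SWf tS xS /\
  (m * xS + n * tS) / (m * x0 + n * k) <= b1 /\ SWf tS xS / SWf k x0 <= b2 /\
  (2 * a * (s - 1) = (m + 1) * s * n * k ->
     (m * xS + n * tS) / (m * x0 + n * k) = b1 /\ SWf tS xS / SWf k x0 = b2).
Proof.
  intros Hm Hn Hn2 Hs Hk Hb Ha Hlo Hhi x0 xS tS SWf b1 b2.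
  assert (Hap : 0 < a) by nra.
  set (Q1 := m * x0 + n * k). set (QS := m * xS + n * tS).
  assert (EQ1 : Q1 = (m * a + n * k) / (m + 1)) by (unfold Q1, x0; field; lra).
  assert (EQS : QS = a * (m * n + m + n) / ((m + 1) * (n + 1))) by (unfold QS, xS, tS; field; lra).
  assert (ESW1 : SWf k x0 = beta * (Q1 * (2 * a - Q1)) / 2) by (unfold SWf, Q1; cbv beta; subst alpha; field).
  assert (ESWS : SWf tS xS = beta * (QS * (2 * a - QS)) / 2) by (unfold SWf, QS; cbv beta; subst alpha; field).
  assert (D1 : QS - Q1 = n * (a - (n + 1) * k) / ((m + 1) * (n + 1))) by (rewrite EQ1, EQS; field; lra).
  assert (D2 : a - QS = a / ((m + 1) * (n + 1))) by (rewrite EQS; field; lra).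
  assert (D3 : a - Q1 = (a - n * k) / (m + 1)) by (rewrite EQ1; field; lra).
  assert (P1 : 0 < QS - Q1) by (rewrite D1; apply Rdiv_lt_0_compat; apply Rmult_lt_0_compat; nra).
  assert (P2 : 0 < a - QS) by (rewrite D2; apply Rdiv_lt_0_compat; [lra|apply Rmult_lt_0_compat; lra]).
  assert (P3 : 0 < a - Q1) by (rewrite D3; apply Rdiv_lt_0_compat; nra).
  assert (PQ1 : 0 < Q1) by (rewrite EQ1; apply Rdiv_lt_0_compat; nra).
  set (Q1h := a * ((m ^ 2 + m + 2) * s - 2) / ((m + 1) ^ 2 * s)).
  assert (Hd1 : 0 < (m ^ 2 + m + 2) * s - 2) by nra.
  assert (Hd2 : 0 < (m ^ 2 + 3 * m) * s + 2) by nra.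
  assert (D4 : Q1 - Q1h = ((m + 1) * s * n * k - 2 * a * (s - 1)) / ((m + 1) ^ 2 * s))
    by (rewrite EQ1; unfold Q1h; field; lra).
  assert (P4 : 0 <= Q1 - Q1h) by (rewrite D4; apply Rmult_le_pos; [lra| apply Rlt_le, Rinv_0_lt_compat; nra]).
  assert (PQ1h : 0 < Q1h) by (unfold Q1h; apply Rdiv_lt_0_compat; nra).
  assert (Eb1 : b1 = (m * n + m + n) * (m + 1) / (m * (m + 1) * (n + 1) + 2 * (n + 1 - s))) by reflexivity.
  assert (Hb1d : 0 < m * (m + 1) * (n + 1) + 2 * (n + 1 - s)) by (subst n; nra).
  assert (Eb2 : b2 = (QS * (2 * a - QS)) / (Q1h * (2 * a - Q1h))).
  { unfold b2. rewrite EQS. unfold Q1h. subst n. field.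
    repeat split; try lra; nra. }
  assert (EratioSW : SWf tS xS / SWf k x0 = (QS * (2 * a - QS)) / (Q1 * (2 * a - Q1))).
  { rewrite ESW1, ESWS. field. split; nra. }
  assert (Eratio : QS / Q1 = a * (m * n + m + n) / ((n + 1) * (m * a + n * k))).
  { rewrite EQ1, EQS. field. repeat split; nra. }
  assert (Cross : (m * n + m + n) * (m + 1) * ((n + 1) * (m * a + n * k))
          - a * (m * n + m + n) * (m * (m + 1) * (n + 1) + 2 * (n + 1 - s))
          = (m * n + m + n) * s * ((m + 1) * s * n * k - 2 * a * (s - 1)))
    by (subst n; ring).
  split; [lra|]. split.
  { rewrite ESW1, ESWS. assert (0 < beta * ((QS - Q1) * (2 * a - QS - Q1))) by (apply Rmult_lt_0_compat; nra).
    nra. }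
  split.
  { fold QS Q1. rewrite Eratio, Eb1. apply frac_le; [nra|lra|].
    assert (0 <= (m * n + m + n) * s * ((m + 1) * s * n * k - 2 * a * (s - 1))).
    { apply Rmult_le_pos; [nra|lra]. }
    lra. }
  split.
  { rewrite EratioSW, Eb2. apply frac_le; [nra|nra|].
    assert (0 < QS * (2 * a - QS)) by nra.
    assert (Q1h * (2 * a - Q1h) <= Q1 * (2 * a - Q1)) by nra.
    apply Rmult_le_compat_l; lra. }
  intros Heq. split.
  { fold QS Q1. rewrite Eratio, Eb1. apply frac_eq; [nra|lra|].
    rewrite Heq in Cross. lra. }
  { rewrite EratioSW, Eb2. assert (Q1 = Q1h) by (rewrite Heq in D4; lra).
    rewrite H. reflexivity. }
Qed.

Lemma hi_conv a X d : 0 < d -> a <= X / d -> a * d <= X.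
Proof.
  intros Hd H. apply (Rmult_le_compat_r d) in H; [|lra].
  replace (X / d * d) with X in H by (field; lra). exact H.
Qed.

Theorem lemma10 :
  forall (M N : nat) (beta C c k : R),
    (1 <= M)%nat -> (2 <= N)%nat -> 0 < beta -> 0 < C -> C <= c -> 0 < k ->
    (c - C) / beta = 0 ->
    let mR := INR M in
    let nR := INR N in
    let lo := (mR + nR + 1) * k in
    let hi := (mR + 1) * sqrt (nR + 1) / (2 * (sqrt (nR + 1) - 1)) * nR * k in
    let b1 := (mR * nR + mR + nR) * (mR + 1)
              / (mR * (mR + 1) * (nR + 1) + 2 * (nR + 1 - sqrt (nR + 1))) in
    let b2 := (mR + 1) ^ 2 * (mR * nR + mR + nR) * (mR * nR + mR + nR + 2)
              / ((nR + 1) * ((mR ^ 2 + mR + 2) * sqrt (nR + 1) - 2)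
                 * ((mR ^ 2 + 3 * mR) * sqrt (nR + 1) + 2)) in
    (* main claim, for every alpha_x in [lo, hi] *)
    (forall alpha : R, 0 < alpha -> lo <= (alpha - C) / beta <= hi ->
      exists f x xS : R,
        inQ M N alpha beta C c k f x /\ inX0 M N alpha beta C c k xS /\
        forall j, (j < N)%nat ->
          let y := yspot M N alpha beta c k (cst f) (cst x) j in
          let yS := yspot M N alpha beta c k (cst 0) (cst xS) j in
          mR * x + nR * y < mR * xS + nR * yS /\
          SW M N alpha beta C c y x < SW M N alpha beta C c yS xS /\
          (mR * xS + nR * yS) / (mR * x + nR * y) <= b1 /\
          SW M N alpha beta C c yS xS / SW M N alpha beta C c y x <= b2) /\
    (* tightness of the first bound *)
    (exists alpha : R, 0 < alpha /\ lo <= (alpha - C) / beta <= hi /\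
      exists f x xS : R,
        inQ M N alpha beta C c k f x /\ inX0 M N alpha beta C c k xS /\
        forall j, (j < N)%nat ->
          let y := yspot M N alpha beta c k (cst f) (cst x) j in
          let yS := yspot M N alpha beta c k (cst 0) (cst xS) j in
          (mR * xS + nR * yS) / (mR * x + nR * y) = b1) /\
    (* tightness of the second bound *)
    (exists alpha : R, 0 < alpha /\ lo <= (alpha - C) / beta <= hi /\
      exists f x xS : R,
        inQ M N alpha beta C c k f x /\ inX0 M N alpha beta C c k xS /\
        forall j, (j < N)%nat ->
          let y := yspot M N alpha beta c k (cst f) (cst x) j in
          let yS := yspot M N alpha beta c k (cst 0) (cst xS) j in
          SW M N alpha beta C c yS xS / SW M N alpha beta C c y x = b2).
Proof.
  intros M N beta C c k HM HN Hb HC HCc Hk Hcc. cbv zeta.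
  assert (Hc : c = C).
  { unfold Rdiv in Hcc. apply Rmult_integral in Hcc. destruct Hcc as [h|h]; [lra|].
    exfalso. apply (Rinv_neq_0_compat beta); lra. }
  subst c.
  assert (Hm : 1 <= INR M) by (apply (le_INR 1 M) in HM; simpl in HM; lra).
  assert (Hn : 2 <= INR N) by (apply (le_INR 2 N) in HN; simpl in HN; lra).
  set (s := sqrt (INR N + 1)).
  assert (Hs : s * s = INR N + 1) by (apply sqrt_sqrt; lra).
  assert (Hs0 : 0 < s) by (apply sqrt_lt_R0; lra).
  assert (Hs1 : 1 < s) by nra.
  assert (Hns : INR N = s * s - 1) by lra.
  set (hi := (INR M + 1) * s / (2 * (s - 1)) * INR N * k).
  assert (Ehi : 2 * hi * (s - 1) = (INR M + 1) * s * INR N * k) by (unfold hi; field; lra).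
  assert (Hlohi : (INR M + INR N + 1) * k <= hi).
  { assert (0 <= (INR M - 1) * (s * s - 1) + (INR M + 1) * (s - 1)) by
      (apply Rplus_le_le_0_compat; apply Rmult_le_pos; nra).
    assert (2 * hi = (INR M + 1) * s * (s + 1) * k).
    { apply (Rmult_eq_reg_r (s - 1)); [|lra]. rewrite Hns in Ehi. lra. }
    rewrite Hns. nra. }
  split; [|split].
  - intros alpha Hal [Hlo Hhi].
    set (a := (alpha - C) / beta) in *.
    assert (Ha : alpha = C + beta * a) by (unfold a; field; lra).
    assert (Hhi' : 2 * a * (s - 1) <= (INR M + 1) * s * INR N * k).
    { rewrite <- Ehi. assert (a <= hi) by exact Hhi. nra. }
    destruct (core M N alpha beta C k a s Hb Hk Hm Hn Hs Hs1 Ha Hlo Hhi') as [HQ [HX [Y1 Y2]]].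
    do 3 eexists. split; [exact HQ|]. split; [exact HX|].
    intros j Hj. rewrite Y1, Y2 by auto. unfold SW.
    destruct (num_main (INR M) (INR N) s k a alpha beta C Hm Hns Hn Hs1 Hk Hb Ha Hlo Hhi')
      as [N1 [N2 [N3 [N4 N5]]]].
    exact (conj N1 (conj N2 (conj N3 N4))).
  - exists (C + beta * hi).
    assert (Ea : (C + beta * hi - C) / beta = hi) by (field; lra).
    split; [assert (0 < beta * hi) by (apply Rmult_lt_0_compat; nra); lra|]. rewrite Ea. split; [lra|].
    assert (Hhi' : 2 * hi * (s - 1) <= (INR M + 1) * s * INR N * k) by lra.
    assert (Ha : C + beta * hi = C + beta * hi) by reflexivity.
    destruct (core M N (C + beta * hi) beta C k hi s Hb Hk Hm Hn Hs Hs1 Ha Hlohi Hhi') as [HQ [HX [Y1 Y2]]].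
    do 3 eexists. split; [exact HQ|]. split; [exact HX|].
    intros j Hj. rewrite Y1, Y2 by auto.
    destruct (num_main (INR M) (INR N) s k hi (C + beta * hi) beta C Hm Hns Hn Hs1 Hk Hb Ha Hlohi Hhi')
      as [N1 [N2 [N3 [N4 N5]]]].
    exact (proj1 (N5 Ehi)).
  - exists (C + beta * hi).
    assert (Ea : (C + beta * hi - C) / beta = hi) by (field; lra).
    split; [assert (0 < beta * hi) by (apply Rmult_lt_0_compat; nra); lra|]. rewrite Ea. split; [lra|].
    assert (Hhi' : 2 * hi * (s - 1) <= (INR M + 1) * s * INR N * k) by lra.
    assert (Ha : C + beta * hi = C + beta * hi) by reflexivity.
    destruct (core M N (C + beta * hi) beta C k hi s Hb Hk Hm Hn Hs Hs1 Ha Hlohi Hhi') as [HQ [HX [Y1 Y2]]].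
    do 3 eexists. split; [exact HQ|]. split; [exact HX|].
    intros j Hj. rewrite Y1, Y2 by auto. unfold SW.
    destruct (num_main (INR M) (INR N) s k hi (C + beta * hi) beta C Hm Hns Hn Hs1 Hk Hb Ha Hlohi Hhi')
      as [N1 [N2 [N3 [N4 N5]]]].
    exact (proj2 (N5 Ehi)).
Qed.
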